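(* Let $(\bar x,\bar y)$ be a local minimax point of $\min_{x\in X}\max_{y\in Y}f(x,y)$ and suppose $f$ is twice semidifferentiable at $(\bar x,\bar y)$. If for every $h\in T_Y(\bar y)\setminus\{0\}$, $$\mathrm{d}^2_{yy}f(\bar x,\bar y)(h)-\mathrm{d}^2\delta_{X\times Y}\big((\bar x,\bar y);\mathrm{d}f(\bar x,\bar y)\big)(0,h)<0,$$ then $(\bar x,\bar y)$ is a calm local minimax point.
   Context: $X\subseteq\mathbb{R}^n$, $Y\subseteq\mathbb{R}^m$ nonempty closed, $f:\mathbb{R}^n\times\mathbb{R}^m\to\mathbb{R}$; $\mathbb{B}_\epsilon(z)$ closed Euclidean ball. Standing assumption: for every $x\in X$, $\bar y\in Y$, $\epsilon\ge0$ the maximum of $f(x,\cdot)$ over $Y\cap\mathbb{B}_\epsilon(\bar y)$ is attained. A radius function is $\tau:[0,\infty)\to[0,\infty)$ with $\tau(0)=0$, $\tau(\delta)\to0$ as $\delta\downarrow0$; calm at $0$ if $\tau(\delta)\le\kappa\delta$ for all $\delta\in[0,\delta_1]$ for some $\kappa,\delta_1>0$. $(\bar x,\bar y)\in X\times Y$ is a local minimax point if there exist $\delta_0>0$ and a radius function $\tau$ with $f(\bar x,y)\le f(\bar x,\bar y)\le\max_{y'\in Y\cap\mathbb{B}_{\tau(\delta)}(\bar y)}f(x,y')$ for all $\delta\in(0,\delta_0]$, $x\in X\cap\mathbb{B}_\delta(\bar x)$, $y\in Y\cap\mathbb{B}_\delta(\bar y)$; calm local minimax if moreover $\tau$ can be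 taken calm at $0$. Variational notation: for $\psi:\mathbb{R}^r\to\mathbb{R}$, $\mathrm{d}\psi(\bar z)(w):=\liminf_{t\downarrow0,w'\to w}\frac{\psi(\bar z+tw')-\psi(\bar z)}{t}$; $\psi$ is semidifferentiable at $\bar z$ if for each $w$ this is a limit (real-valued); $\mathrm{d}^2\psi(\bar z)(w):=\liminf_{t\downarrow0,w'\to w}\frac{\psi(\bar z+tw')-\psi(\bar z)-t\,\mathrm{d}\psi(\bar z)(w')}{\frac12t^2}$; $\psi$ is twice semidifferentiable at $\bar z$ if it is semidifferentiable there and for each $w$ this liminf is a limit (real-valued). $\mathrm{d}f(\bar x,\bar y)(u,h)$ is the subderivative of $f$ at $(\bar x,\bar y)$ in direction $(u,h)$, and $\mathrm{d}^2_{yy}f(\bar x,\bar y)(h)$ is the second subderivative of $f(\bar x,\cdot)$ at $\bar y$. $T_S(\bar z)$ is the tangent cone ($w\in T_S(\bar z)$ iff $\exists t_k\downarrow0$, $w_k\to w$ with $\bar z+t_kw_k\in S$). For closed $S$, $\bar z\in S$, $\varphi:\mathbb{R}^r\to\mathbb{R}$: $\mathrm{d}^2\delta_S(\bar z;\varphi)(w):=\liminf_{t\downarrow0,\,w'\to w,\ \bar z+tw'\in S}\frac{-2\varphi(w')}{t}$ ($+\infty$ if no such $t,w'$). Thus $\mathrm{d}^2\delta_{X\times Y}((\bar x,\bar y);\mathrm{d}f(\bar x,\bar y))(0,h)=\liminf_{t\downarrow0,\,(u',h')\to(0,h),\ \bar x+tu'\in X,\ \bar y+th'\in Y}\frac{-2\,\mathrm{d}f(\bar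 x,\bar y)(u',h')}{t}$. *)

(* Defs.v *)
From HB Require Import structures.
From mathcomp Require Import all_boot all_order all_algebra.
From mathcomp Require Import all_classical all_reals all_analysis.
Set Implicit Arguments. Unset Strict Implicit. Unset Printing Implicit Defensive.
Import Order.TTheory GRing.Theory Num.Theory.
Import numFieldNormedType.Exports.
Local Open Scope classical_set_scope.
Local Open Scope ring_scope.

Section Defs.
Variable R : realType.

Definition enorm (k : nat) (v : 'rV[R]_k) : R :=
  Num.sqrt (\sum_(i < k) (v ord0 i) ^+ 2).

Definition cball (k : nat) (z : 'rV[R]_k) (eps : R) : set 'rV[R]_k :=
  [set w | enorm (w - z) <= eps].

(* liminf_{t \downarrow 0, w' -> w, P t w'} g t w'  (in \bar R; +oo if no admissible t,w') *)
Definition liminf0 (k : nat) (P : R -> 'rV[R]_k -> Prop)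
  (g : R -> 'rV[R]_k -> \bar R) (w : 'rV[R]_k) : \bar R :=
  ereal_sup [set ereal_inf [set g p.1 p.2 | p in
      [set p : R * 'rV[R]_k | 0 < p.1 < e /\ enorm (p.2 - w) < e /\ P p.1 p.2]]
    | e in [set e : R | 0 < e]].

Definition has_real_limit0 (k : nat) (g : R -> 'rV[R]_k -> \bar R)
  (w : 'rV[R]_k) : Prop :=
  exists L : R, forall e : R, 0 < e -> exists2 d : R, 0 < d &
    forall (t : R) (w' : 'rV[R]_k), 0 < t < d -> enorm (w' - w) < d ->
      ((L - e)%:E < g t w')%E /\ (g t w' < (L + e)%:E)%E.

Definition dq1 (k : nat) (psi : 'rV[R]_k -> R) (z : 'rV[R]_k)
  (t : R) (w' : 'rV[R]_k) : \bar R :=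
  ((psi (z + t *: w') - psi z) / t)%:E.

Definition subderiv (k : nat) (psi : 'rV[R]_k -> R) (z w : 'rV[R]_k) : \bar R :=
  liminf0 (fun _ _ => True) (dq1 psi z) w.

Definition semidifferentiable (k : nat) (psi : 'rV[R]_k -> R) (z : 'rV[R]_k) :=
  forall w, has_real_limit0 (dq1 psi z) w.

Definition dq2 (k : nat) (psi : 'rV[R]_k -> R) (z : 'rV[R]_k)
  (t : R) (w' : 'rV[R]_k) : \bar R :=
  (((psi (z + t *: w') - psi z)%:E - t%:E * subderiv psi z w')
     * ((t ^+ 2 / 2)^-1)%:E)%E.

Definition subderiv2 (k : nat) (psi : 'rV[R]_k -> R) (z w : 'rV[R]_k) : \bar R :=
  liminf0 (fun _ _ => True) (dq2 psi z) w.

Definition twice_semidifferentiable (k : nat) (psi : 'rV[R]_k -> R)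
  (z : 'rV[R]_k) :=
  semidifferentiable psi z /\ forall w, has_real_limit0 (dq2 psi z) w.

Definition tangent_cone (k : nat) (S : set 'rV[R]_k) (z : 'rV[R]_k) :
  set 'rV[R]_k :=
  [set w | exists (t : nat -> R) (wk : nat -> 'rV[R]_k),
     (forall j, 0 < t j) /\
     (forall e : R, 0 < e -> exists N : nat, forall j, (N <= j)%N ->
        `|t j| < e /\ enorm (wk j - w) < e) /\
     (forall j, S (z + t j *: wk j))].

Definition d2indicator (k : nat) (S : set 'rV[R]_k) (z : 'rV[R]_k)
  (phi : 'rV[R]_k -> \bar R) (w : 'rV[R]_k) : \bar R :=
  liminf0 (fun t w' => S (z + t *: w'))
          (fun t w' => ((- 2)%:E * phi w' * (t^-1)%:E)%E) w.

(* f on R^n x R^m viewed as a function on R^(n+m) via (x,y) |-> row_mx x y *)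
Definition joint (n m : nat) (f : 'rV[R]_n -> 'rV[R]_m -> R) : 'rV[R]_(n + m) -> R :=
  fun z => f (lsubmx z) (rsubmx z).

Definition prodset (n m : nat) (X : set 'rV[R]_n) (Y : set 'rV[R]_m) :
  set 'rV[R]_(n + m) := [set z | X (lsubmx z) /\ Y (rsubmx z)].

(* max_{y' in Y \cap B_eps(ybar)} f(x, y'), as a supremum in \bar R
   (it is attained under the standing assumption) *)
Definition maxloc (n m : nat) (f : 'rV[R]_n -> 'rV[R]_m -> R)
  (Y : set 'rV[R]_m) (x : 'rV[R]_n) (ybar : 'rV[R]_m) (eps : R) : \bar R :=
  ereal_sup [set (f x y')%:E | y' in Y `&` cball ybar eps].

Definition radius_function (tau : R -> R) : Prop :=
  tau 0 = 0 /\ (forall d, 0 <= d -> 0 <= tau d) /\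
  (forall e : R, 0 < e -> exists2 d1 : R, 0 < d1 &
     forall d, 0 < d < d1 -> tau d < e).

Definition calm_at0 (tau : R -> R) : Prop :=
  exists kappa d1 : R, 0 < kappa /\ 0 < d1 /\
    forall d, 0 <= d <= d1 -> tau d <= kappa * d.

Definition minimax_with (n m : nat) (f : 'rV[R]_n -> 'rV[R]_m -> R)
  (X : set 'rV[R]_n) (Y : set 'rV[R]_m) (xbar : 'rV[R]_n) (ybar : 'rV[R]_m)
  (d0 : R) (tau : R -> R) : Prop :=
  forall d, 0 < d <= d0 ->
    forall x y, X x -> cball xbar d x -> Y y -> cball ybar d y ->
      f xbar y <= f xbar ybar /\
      ((f xbar ybar)%:E <= maxloc f Y x ybar (tau d))%E.

Definition local_minimax (n m : nat) (f : 'rV[R]_n -> 'rV[R]_m -> R)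
  (X : set 'rV[R]_n) (Y : set 'rV[R]_m) (xbar : 'rV[R]_n) (ybar : 'rV[R]_m) :=
  X xbar /\ Y ybar /\
  exists d0 tau, 0 < d0 /\ radius_function tau /\ minimax_with f X Y xbar ybar d0 tau.

Definition calm_local_minimax (n m : nat) (f : 'rV[R]_n -> 'rV[R]_m -> R)
  (X : set 'rV[R]_n) (Y : set 'rV[R]_m) (xbar : 'rV[R]_n) (ybar : 'rV[R]_m) :=
  X xbar /\ Y ybar /\
  exists d0 tau, 0 < d0 /\ radius_function tau /\ calm_at0 tau /\
    minimax_with f X Y xbar ybar d0 tau.

End Defs.

(* Main.v *)
Require Import Defs.
From HB Require Import structures.
From mathcomp Require Import all_boot all_order all_algebra.
From mathcomp Require Import all_classical all_reals all_analysis.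
From mathcomp Require Import ring lra.
Import Order.TTheory GRing.Theory Num.Theory.
Import numFieldNormedType.Exports.
Local Open Scope classical_set_scope.
Local Open Scope ring_scope.
Set Implicit Arguments. Unset Strict Implicit. Unset Printing Implicit Defensive.

Section Aux.
Variable R : realType.

Lemma enorm_ge0 k (v : 'rV[R]_k) : 0 <= enorm v.
Proof. exact: sqrtr_ge0. Qed.

Lemma coord_le_enorm k (v : 'rV[R]_k) i : `|v ord0 i| <= enorm v.
Proof.
rewrite /enorm -sqrtr_sqr ler_wsqrtr //.
rewrite (bigD1 i) //= lerDl; apply: sumr_ge0 => j _; exact: sqr_ge0.
Qed.

Lemma entry_le_norm k l (M : 'M[R]_(k, l)) i j : `|M i j| <= `|M|.
Proof.
rewrite [X in _ <= X]/Num.norm /= mx_normrE.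
exact: (le_bigmax _ (fun ij : 'I_k * 'I_l => `|M ij.1 ij.2|) (i, j)).
Qed.

Lemma norm_le_entries k l (M : 'M[R]_(k, l)) c : 0 <= c ->
  (forall i j, `|M i j| <= c) -> `|M| <= c.
Proof.
move=> c0 H; rewrite [X in X <= _]/Num.norm /= mx_normrE.
by apply: bigmax_le => // ij _; apply: H.
Qed.

Lemma mxnorm_le_enorm k (v : 'rV[R]_k) : `|v| <= enorm v.
Proof.
apply: norm_le_entries; first exact: enorm_ge0.
by move=> i j; rewrite (ord1 i); apply: coord_le_enorm.
Qed.

Lemma enorm_le_mxnorm k (v : 'rV[R]_k) : enorm v <= k%:R * `|v|.
Proof.
have h0 : 0 <= k%:R * `|v| by rewrite mulr_ge0.
rewrite /enorm -(ger0_norm h0) -sqrtr_sqr ler_wsqrtr //.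
apply: (@le_trans _ _ (\sum_(i < k) `|v|^+2)).
  apply: ler_sum => i _.
  have a := entry_le_norm v ord0 i.
  have b := normr_ge0 (v ord0 i).
  rewrite -real_normK ?num_real //. by rewrite lerXn2r ?nnegrE //.
rewrite sumr_const card_ord.
case: k {h0} v => [|k] v; first by rewrite mulr0n mul0r expr0n /=.
rewrite -mulr_natl; have hk : 1 <= (k.+1)%:R :> R by rewrite ler1n.
have := normr_ge0 v; set a := `|v|; nra.
Qed.

Lemma enorm_row0 n m (v : 'rV[R]_m) : enorm (row_mx (0 : 'rV[R]_n) v) = enorm v.
Proof.
rewrite /enorm big_split_ord /=.
rewrite big1 ?add0r; last by move=> i _; rewrite row_mxEl mxE expr0n.
by congr Num.sqrt; apply: eq_bigr => i _; rewrite row_mxEr.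
Qed.

Lemma mxnorm_row_mx n m (a : 'rV[R]_n) (b : 'rV[R]_m) :
  `|row_mx a b| <= `|a| + `|b|.
Proof.
apply: norm_le_entries; first by rewrite addr_ge0.
move=> i j; rewrite mxE; case: (fintype.split j) => j'.
  by rewrite (le_trans (entry_le_norm _ _ _)) // lerDl.
by rewrite (le_trans (entry_le_norm _ _ _)) // lerDr.
Qed.

Lemma mxnorm_rsub n m (v : 'rV[R]_(n + m)) : `|rsubmx v| <= `|v|.
Proof.
apply: norm_le_entries => // i j; rewrite mxE; exact: entry_le_norm.
Qed.

Lemma zw n m (xb : 'rV[R]_n) (yb : 'rV[R]_m) t u v :
  row_mx xb yb + t *: row_mx u v = row_mx (xb + t *: u) (yb + t *: v).
Proof. by rewrite scale_row_mx add_row_mx. Qed.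

End Aux.


Section Aux2.
Variable R : realType.

Lemma enorm0 k : enorm (0 : 'rV[R]_k) = 0.
Proof. by rewrite /enorm big1 ?sqrtr0 // => i _; rewrite mxE expr0n. Qed.

Definition limat k (g : R -> 'rV[R]_k -> \bar R) (w : 'rV[R]_k) (L : R) :=
  forall e : R, 0 < e -> exists2 d : R, 0 < d &
    forall (t : R) (w' : 'rV[R]_k), 0 < t < d -> enorm (w' - w) < d ->
      ((L - e)%:E < g t w')%E /\ (g t w' < (L + e)%:E)%E.

Lemma liminf_lim k (g : R -> 'rV[R]_k -> \bar R) w L :
  limat g w L -> liminf0 (fun _ _ => True) g w = L%:E.
Proof.
move=> H; apply/eqP; rewrite eq_le; apply/andP; split.
- apply/lee_addgt0Pr => e e0; apply: ge_ereal_sup => _ [r r0 <-].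
  have [d d0 Hd] := H e e0.
  pose t := Num.min r d / 2.
  have hm : 0 < Num.min r d by rewrite lt_min r0 d0.
  have t0 : 0 < t by rewrite divr_gt0.
  have tm : t < Num.min r d by rewrite /t ltr_pdivrMr // ltr_pMr // ltr1n.
  have tr : t < r by apply: (lt_le_trans tm); rewrite ge_min lexx.
  have td : t < d by apply: (lt_le_trans tm); rewrite ge_min lexx orbT.
  apply: ge_ereal_inf; exists (g t w).
    by exists (t, w) => //=; rewrite t0 tr subrr enorm0 r0.
  have htd : 0 < t < d by rewrite t0 td.
  have hw0 : enorm (w - w) < d by rewrite subrr enorm0.
  have [_ /ltW] := Hd t w htd hw0.
  by rewrite EFinD.
- apply/lee_addgt0Pr => e e0.
  have [d d0 Hd] := H e e0.
  rewrite -leeBlDr //.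
  apply: (@le_trans _ _ (ereal_inf [set g p.1 p.2 | p in
      [set p : R * 'rV[R]_k | 0 < p.1 < d /\ enorm (p.2 - w) < d /\ True]])).
    apply: le_ereal_inf_tmp => _ [[t w'] [/= ht [hw _]] <-].
    by have [/ltW] := Hd t w' ht hw; rewrite EFinB.
  by apply: ereal_sup_ubound; exists d.
Qed.

Lemma restr_lim n m (g1 : R -> 'rV[R]_m -> \bar R) (g2 : R -> 'rV[R]_(n + m) -> \bar R)
  h L : (forall t v, g1 t v = g2 t (row_mx 0 v)) ->
  limat g2 (row_mx 0 h) L -> limat g1 h L.
Proof.
move=> E H e e0; have [d d0 Hd] := H e e0; exists d => // t w' ht hw.
rewrite E; apply: Hd => //.
by rewrite opp_row_mx add_row_mx oppr0 addr0 enorm_row0.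
Qed.

End Aux2.


Section Aux3.
Variable R : realType.

Lemma gap (a : R) (b : \bar R) : (a%:E - b < 0)%E -> exists c, a < c /\ (c%:E < b)%E.
Proof.
case: b => [r| |] /=.
- rewrite -EFinB lte_fin => H; exists ((a + r) / 2); split; rewrite ?lte_fin; lra.
- by move=> _; exists (a + 1); split; [lra| exact: ltry].
- by [].
Qed.

Variables (n m : nat) (X : set 'rV[R]_n) (Y : set 'rV[R]_m)
  (f : 'rV[R]_n -> 'rV[R]_m -> R) (xbar : 'rV[R]_n) (ybar : 'rV[R]_m).

Let z := row_mx xbar ybar.
Let F := joint f.

Lemma jointE t v : F (z + t *: row_mx 0 v) = f xbar (ybar + t *: v).
Proof. by rewrite /F /z /joint zw row_mxKl row_mxKr scaler0 addr0. Qed.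

Lemma jointz : F z = f xbar ybar.
Proof. by rewrite /F /z /joint row_mxKl row_mxKr. Qed.

Lemma subderiv_restr : semidifferentiable F z -> forall v,
  subderiv (f xbar) ybar v = subderiv F z (row_mx 0 v).
Proof.
move=> sd v; have [L HL] := sd (row_mx 0 v).
rewrite /subderiv (liminf_lim HL) (@liminf_lim _ _ _ _ L) //.
apply: (restr_lim (g2 := dq1 F z)) HL => t w.
by rewrite /dq1 jointE jointz.
Qed.

Lemma subderiv2_restr : twice_semidifferentiable F z -> forall h,
  exists L2, subderiv2 (f xbar) ybar h = L2%:E /\ limat (dq2 F z) (row_mx 0 h) L2.
Proof.
move=> [sd tsd] h; have [L HL] := tsd (row_mx 0 h); exists L; split => //.
rewrite /subderiv2 (@liminf_lim _ _ _ _ L) //.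
apply: (restr_lim (g2 := dq2 F z)) HL => t w.
by rewrite /dq2 jointE jointz subderiv_restr.
Qed.

Lemma loc_T h : twice_semidifferentiable F z ->
  (subderiv2 (f xbar) ybar h
      - d2indicator (prodset X Y) z (subderiv F z) (row_mx 0 h) < 0)%E ->
  exists2 r, 0 < r & forall t w, 0 < t < r -> enorm (w - row_mx 0 h) < r ->
    prodset X Y (z + t *: w) -> F (z + t *: w) < F z.
Proof.
move=> tsd; have [L2 [E2 HL2]] := subderiv2_restr tsd h.
rewrite E2 => /gap [c [Lc /ereal_sup_gt [_ [e e0 <-] hc]]].
have cL : 0 < c - L2 by rewrite subr_gt0.
have [d d0 Hd] := HL2 (c - L2) cL.
exists (Num.min e d); first by rewrite lt_min e0 d0.
move=> t w /andP[t0 tm] hw hP; rewrite ltNge; apply/negP => hge.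
have te : t < e by apply: (lt_le_trans tm); rewrite ge_min lexx.
have td : t < d by apply: (lt_le_trans tm); rewrite ge_min lexx orbT.
have we : enorm (w - row_mx 0 h) < e by apply: (lt_le_trans hw); rewrite ge_min lexx.
have wd : enorm (w - row_mx 0 h) < d by apply: (lt_le_trans hw); rewrite ge_min lexx orbT.
have [L1 HL1] := tsd.1 w.
have h1 : (c%:E < (- 2)%:E * subderiv F z w * (t^-1)%:E)%E.
  apply: (lt_le_trans hc); apply: ereal_inf_lbound.
  by exists (t, w) => //=; rewrite t0 te.
have htd : 0 < t < d by rewrite t0 td.
have [_ h2] := Hd t w htd wd.
move: h1 h2; rewrite /dq2 /subderiv (liminf_lim HL1).
rewrite -!EFinM !lte_fin.
move: hge; rewrite -subr_ge0; set D := _ - F z => hD h1 h2.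
have tn : t != 0 by rewrite gt_eqF.
have e1 : (D - t * L1) / (t ^+ 2 / 2) = D / (t ^+ 2 / 2) + - 2 * L1 / t.
  by field.
have e2 : 0 <= D / (t ^+ 2 / 2) by rewrite mulr_ge0 // invr_ge0 divr_ge0 // sqr_ge0.
rewrite e1 addrCA subrr addr0 in h2.
have h3 : -2 * L1 / t <= D / (t ^+ 2 / 2) + -2 * L1 / t by rewrite lerDr.
by have := lt_trans (lt_le_trans h1 h3) h2; rewrite ltxx.
Qed.

End Aux3.


Section Aux4.
Variable R : realType.

Lemma inv_small (e : R) : 0 < e -> exists N : nat, forall j, (N <= j)%N ->
  (j.+1%:R)^-1 < e.
Proof.
move=> e0; exists (Num.Def.archi_bound e^-1) => j hj.
have h0 : 0 <= e^-1 by rewrite invr_ge0 ltW.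
have h1 := archi_boundP h0; rewrite invf_plt ?posrE ?ltr0n //.
apply: (lt_le_trans h1); rewrite ler_nat; exact: leqW.
Qed.

Lemma loc_NT m (Y : set 'rV[R]_m) (ybar h : 'rV[R]_m) :
  ~ tangent_cone Y ybar h -> exists2 r, 0 < r & forall t (v : 'rV_m),
    0 < t < r -> enorm (v - h) < r -> ~ Y (ybar + t *: v).
Proof.
move=> nT; apply: contrapT => hn; apply: nT.
have H : forall j : nat, exists p : R * 'rV[R]_m,
    0 < p.1 < (j.+1%:R)^-1 /\ enorm (p.2 - h) < (j.+1%:R)^-1 /\ Y (ybar + p.1 *: p.2).
  move=> j; apply: contrapT => H0; apply: hn; exists (j.+1%:R)^-1.
    by rewrite invr_gt0 ltr0n.
  by move=> t v ht hv hY; apply: H0; exists (t, v).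
have [g Hg] := choice H.
exists (fun j => (g j).1), (fun j => (g j).2); split; last split.
- by move=> j; have [/andP[]] := Hg j.
- move=> e e0; have [N HN] := inv_small e0; exists N => j hj.
  have [/andP[t0 t1] [hv _]] := Hg j; have := HN j hj.
  by rewrite gtr0_norm // => he; split; apply: lt_trans he.
- by move=> j; have [_ [_ ?]] := Hg j.
Qed.

End Aux4.


Section Aux5.
Variable R : realType.

Lemma loc n m (X : set 'rV[R]_n) (Y : set 'rV[R]_m)
  (f : 'rV[R]_n -> 'rV[R]_m -> R) (xbar : 'rV[R]_n) (ybar : 'rV[R]_m) :
  twice_semidifferentiable (joint f) (row_mx xbar ybar) ->
  (forall h : 'rV[R]_m, tangent_cone Y ybar h -> h != 0 ->
     (subderiv2 (f xbar) ybar h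
      - d2indicator (prodset X Y) (row_mx xbar ybar)
          (subderiv (joint f) (row_mx xbar ybar)) (row_mx 0 h) < 0)%E) ->
  forall h : 'rV[R]_m, `|h| = 1 ->
  exists2 r, 0 < r & forall t w, 0 < t < r -> `|w - row_mx 0 h| < r ->
    prodset X Y (row_mx xbar ybar + t *: w) ->
    joint f (row_mx xbar ybar + t *: w) < joint f (row_mx xbar ybar).
Proof.
move=> tsd cond h h1.
have hn0 : h != 0 by apply/eqP => h0; move: h1; rewrite h0 normr0 => /eqP; rewrite eq_sym oner_eq0.
pose K : R := (n + m)%:R + 1.
have K0 : 0 < K by rewrite /K ltr_wpDl.
case: (pselect (tangent_cone Y ybar h)) => hT.
- have [r0 r00 H] := @loc_T _ _ _ X Y f xbar ybar h tsd (cond h hT hn0).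
  exists (r0 / K); first by rewrite divr_gt0.
  move=> t w ht hw hP.
  have ht' : 0 < t < r0.
    case/andP: ht => t0 t1; rewrite t0 (lt_le_trans t1) //.
    rewrite ler_pdivrMr // ler_peMr // /K; last by rewrite lerDr ler0n.
    by rewrite ltW.
  apply: H => //.
  apply: (le_lt_trans (enorm_le_mxnorm _)).
  rewrite ltr_pdivlMr // in hw; apply: le_lt_trans hw.
  by rewrite mulrC ler_wpM2l // /K lerDl.
- have [r0 r00 H] := loc_NT hT.
  exists (r0 / K); first by rewrite divr_gt0.
  move=> t w ht hw [_ hP]; exfalso.
  have ht' : 0 < t < r0.
    case/andP: ht => t0 t1; rewrite t0 (lt_le_trans t1) //.
    rewrite ler_pdivrMr // ler_peMr // /K; last by rewrite lerDr ler0n.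
    by rewrite ltW.
  apply: (H t (rsubmx w) ht').
    have -> : rsubmx w - h = rsubmx (w - row_mx 0 h).
      by rewrite -{2}[w]hsubmxK opp_row_mx add_row_mx row_mxKr.
    apply: (le_lt_trans (enorm_le_mxnorm _)).
    rewrite ltr_pdivlMr // in hw; apply: le_lt_trans hw.
    rewrite mulrC; apply: ler_pM => //.
      exact: mxnorm_rsub.
    rewrite /K natr1 ler_nat; apply: leqW; exact: leq_addl.
  have e : rsubmx (row_mx xbar ybar + t *: w) = ybar + t *: rsubmx w.
    by rewrite -{1}[w]hsubmxK zw row_mxKr.
  by rewrite -e.
Qed.

End Aux5.


Section Aux6.
Variable R : realType.

Lemma bigmin_seq_le (T : eqType) (s : seq T) (F : T -> R) i : i \in s ->
  \big[Num.min/1]_(j <- s) F j <= F i.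
Proof.
elim: s => [//|a s IH]; rewrite in_cons big_cons => /orP[/eqP ->|/IH h].
  by rewrite ge_min lexx.
by rewrite ge_min h orbT.
Qed.

Lemma sphere_unif m (Q : 'rV[R]_m -> R -> Prop) :
  (forall h, `|h| = 1 -> exists2 r, 0 < r & Q h r) ->
  exists2 E, 0 < E & forall h', `|h'| = 1 -> exists h r,
     [/\ 0 < r, Q h r, E <= r / 2 & `|h - h'| < r / 2].
Proof.
move=> HQ.
have H' : forall h : 'rV[R]_m, exists r : R, 0 < r /\ (`|h| = 1 -> Q h r).
  move=> h; case: (pselect (`|h| = 1)) => h1.
    by have [r r0 q] := HQ h h1; exists r.
  by exists 1.
have [rf Hr] := choice H'.
have cS : compact [set h : 'rV[R]_m | `|h| = 1].
  apply: bounded_closed_compact.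
    exists 1; split; first exact: num_real.
    by move=> M M1 x /= ->; rewrite ltW.
  have -> : [set h : 'rV[R]_m | `|h| = 1] = Num.norm @^-1` [set x : R | x = 1] by [].
  apply: closed_comp; last exact: closed_eq.
  by move=> x _; exact: norm_continuous.
rewrite compact_cover in cS.
have cv : [set h : 'rV[R]_m | `|h| = 1] `<=` cover [set h : 'rV[R]_m | `|h| = 1] (fun h => ball h (rf h / 2)).
  move=> h h1; exists h => //; apply: ballxx; apply: divr_gt0 => //; exact: (Hr h).1.
have [D' sub cov] := cS _ [set h : 'rV[R]_m | `|h| = 1] (fun h => ball h (rf h / 2))
  (fun i _ => ball_open _ _) cv.
exists (\big[Num.min/1]_(i <- finmap.enum_fset D') (rf i / 2)).
  elim: (finmap.enum_fset D') => [|a s IH]; first by rewrite big_nil.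
  by rewrite big_cons lt_min IH andbT divr_gt0 // (Hr a).1.
move=> h' h'1; have [i Di bi] := cov h' h'1.
have Di' : `|i| = 1 by have := sub i Di; rewrite inE.
exists i, (rf i); split.
- exact: (Hr i).1.
- exact: (Hr i).2.
- exact: bigmin_seq_le.
- by move: bi; rewrite -ball_normE.
Qed.

End Aux6.

Unset Implicit Arguments. Set Strict Implicit. Set Printing Implicit Defensive.

Theorem mainTheorem7 (R : realType) (n m : nat)
  (X : set 'rV[R]_n) (Y : set 'rV[R]_m) (f : 'rV[R]_n -> 'rV[R]_m -> R)
  (xbar : 'rV[R]_n) (ybar : 'rV[R]_m) :
  X !=set0 -> Y !=set0 -> closed X -> closed Y ->
  (* standing assumption: the local maxima in y are attained *)
  (forall (x : 'rV[R]_n) (y0 : 'rV[R]_m) (eps : R), X x -> Y y0 -> 0 <= eps ->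
     exists2 y, (Y `&` cball y0 eps) y &
       forall y', (Y `&` cball y0 eps) y' -> f x y' <= f x y) ->
  local_minimax f X Y xbar ybar ->
  twice_semidifferentiable (joint f) (row_mx xbar ybar) ->
  (forall h : 'rV[R]_m, tangent_cone Y ybar h -> h != 0 ->
     (subderiv2 (f xbar) ybar h
      - d2indicator (prodset X Y) (row_mx xbar ybar)
          (subderiv (joint f) (row_mx xbar ybar)) (row_mx 0 h) < 0)%E) ->
  calm_local_minimax f X Y xbar ybar.
Proof.
move=> _ _ _ _ attain [Xx [Yy [d0 [tau [d00 [rad mm]]]]]] tsd cond.
have Lc := loc tsd cond.
have [E E0 HE] := sphere_unif Lc.
have KEY : forall x y, X x -> Y y -> f xbar ybar <= f x y -> `|y - ybar| < E ->
    `|y - ybar| * E <= `|x - xbar|.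
  move=> x y hx hy hf hyE.
  have [->|yn] := eqVneq y ybar; first by rewrite subrr normr0 mul0r.
  set s := `|y - ybar|.
  have s0 : 0 < s by rewrite normr_gt0 subr_eq0.
  have sn : s != 0 by rewrite gt_eqF.
  pose h' := s^-1 *: (y - ybar).
  have h'1 : `|h'| = 1 by rewrite normrZ ger0_norm ?invr_ge0 ?ltW // mulVf.
  have [h [r [r0 Q Er hh]]] := HE h' h'1.
  rewrite leNgt; apply/negP => hlt.
  pose u := s^-1 *: (x - xbar).
  have uE : `|u| < E.
    by rewrite normrZ ger0_norm ?invr_ge0 ?ltW // mulrC ltr_pdivrMr // mulrC.
  have sr : 0 < s < r.
    rewrite s0 /=; apply: (lt_le_trans hyE); apply: (le_trans Er).
    rewrite ler_pdivrMr // ler_peMr //.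
    exact: ltW.
    by rewrite ler1n.
  have hw : `|row_mx u h' - row_mx 0 h| < r.
    rewrite opp_row_mx add_row_mx oppr0 addr0.
    apply: (le_lt_trans (mxnorm_row_mx _ _)).
    rewrite distrC; apply: (lt_le_trans (ltrD uE hh)); apply: (le_trans (lerD Er (lexx _))).
    by rewrite -splitr.
  have ez : row_mx xbar ybar + s *: row_mx u h' = row_mx x y.
    by rewrite zw !scalerA divff // !scale1r addrC subrK [ybar + _]addrC subrK.
  have hP : prodset X Y (row_mx xbar ybar + s *: row_mx u h').
    by rewrite ez; split; rewrite ?row_mxKl ?row_mxKr.
  have := Q s (row_mx u h') sr hw hP.
  by rewrite ez /joint !row_mxKl !row_mxKr ltNge hf.
have [tau0 [tge0 tlim]] := rad.
have [d1 d10 Hd1] := tlim E E0.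
pose kap : R := (m%:R + 1) / E.
have kap0 : 0 < kap by rewrite divr_gt0 // ltr_wpDl.
split => //; split => //.
exists (Num.min d0 (d1 / 2)), (fun d => kap * d).
split; first by rewrite lt_min d00 divr_gt0.
split.
  split; first by rewrite mulr0.
  split; first by move=> d d0'; rewrite mulr_ge0 // ltW.
  move=> e e0; exists (e / kap); first by rewrite divr_gt0.
  by move=> d /andP[_ hd]; rewrite mulrC -ltr_pdivlMr.
split.
  exists kap, 1; split => //; split => // d _; exact: lexx.
move=> d /andP[dpos dle] x y hx hxd hy hyd.
have dd0 : 0 < d <= d0.
  by rewrite dpos /=; apply: (le_trans dle); rewrite ge_min lexx.
have [mm1 mm2] := mm d dd0 x y hx hxd hy hyd.
split => //.
have td0 : 0 <= tau d by apply: tge0; exact: ltW.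
have [ym [Yym bym] maxym] := attain x ybar (tau d) hx Yy td0.
have fz : f xbar ybar <= f x ym.
  rewrite -lee_fin; apply: (le_trans mm2); apply: ge_ereal_sup.
  by move=> _ [y' hy' <-]; rewrite lee_fin; apply: maxym.
have dd1 : d < d1.
  have h2 : d1 / 2 < d1 by rewrite ltr_pdivrMr // ltr_pMr // ltr1n.
  apply: (le_lt_trans dle); apply: (le_lt_trans _ h2); by rewrite ge_min lexx orbT.
have tE : tau d < E by apply: Hd1; rewrite dpos.
have eyE : enorm (ym - ybar) < E by apply: le_lt_trans tE.
have hK := KEY x ym hx Yym fz (le_lt_trans (mxnorm_le_enorm _) eyE).
have hxn : `|x - xbar| <= d := le_trans (mxnorm_le_enorm _) hxd.
have hyn : `|ym - ybar| <= d / E.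
  by rewrite ler_pdivlMr //; apply: le_trans hK hxn.
apply: (@le_trans _ _ (f x ym)%:E); first by rewrite lee_fin.
apply: ereal_sup_ubound; exists ym => //; split => //.
rewrite /cball /=; apply: (le_trans (enorm_le_mxnorm _)).
rewrite /kap mulrAC -mulrA; apply: ler_pM => //.
by rewrite lerDl.
Qed.
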